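(* With $\lambda=0$, the ordering $O(n^a,n^b)$ output by the xOrder procedure (defined in the context) maximizes $\mathrm{AUC}^o$ over all cross-group orderings $o$ of $(\mathrm{p}^a,\mathrm{p}^b)$; i.e., it is a global maximizer of $J(o)=\mathrm{AUC}^o-\lambda\Delta\mathrm{xAUC}^o$ for $\lambda=0$.
   Context: Setting: two disjoint finite groups $a,b$ of instances with labels $Y_u\in\{0,1\}$; $n^g,n^g_1,n^g_0$ denote the size, number of positives and number of negatives of group $g$ (all counts $\ge1$); $n_1=n_1^a+n_1^b$, $n_0=n_0^a+n_0^b$, $k_{a,b}=n_1^an_0^b$, $k_{b,a}=n_0^an_1^b$, $k=n_0n_1$. $\mathrm{p}^a=(\mathrm{p}^{a(1)},\dots,\mathrm{p}^{a(n^a)})$ and $\mathrm{p}^b=(\mathrm{p}^{b(1)},\dots,\mathrm{p}^{b(n^b)})$ are fixed orderings of the groups (e.g. by decreasing score). A cross-group ordering is a list of all instances of $a\cup b$ preserving the relative orders within $\mathrm{p}^a$ and within $\mathrm{p}^b$; ''precedes'' means ranked higher. $\mathrm{AUC}^o=\frac{1}{n_1n_0}\#\{(u,v):Y_u=1,Y_v=0,u\text{ precedes }v\text{ in }o\}$; $\mathrm{xAUC}^o(a,b)=\frac{1}{n_1^an_0^b}\#\{(u,v):u\in a,Y_u=1,v\in b,Y_v=0,u\text{ precedes }v\}$, $\mathrm{xAUC}^o(b,a)$ symmetrically; $\Delta\mathrm{xAUC}^o=|\mathrm{xAUC}^o(a,b)-\mathrm{xAUC}^o(b,a)|$. xOrder: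 For $0\le i\le n^a$, $0\le j\le n^b$ and a list $q$ that interleaves $\mathrm{p}^{a(1)},\dots,\mathrm{p}^{a(i)}$ and $\mathrm{p}^{b(1)},\dots,\mathrm{p}^{b(j)}$ preserving within-group orders, let $q^{\to b}$ be $q$ followed by $\mathrm{p}^{b(j+1)},\dots,\mathrm{p}^{b(n^b)}$ and $q^{\to a}$ be $q$ followed by $\mathrm{p}^{a(i+1)},\dots,\mathrm{p}^{a(n^a)}$. Define $A(q)=\frac{1}{n_1^an_0^b}\#\{(u,v): u\in\{\mathrm{p}^{a(1)},..,\mathrm{p}^{a(i)}\},Y_u=1,v\in b,Y_v=0,u\text{ precedes }v\text{ in }q^{\to b}\}$, $B(q)=\frac{1}{n_1^bn_0^a}\#\{(u,v): u\in\{\mathrm{p}^{b(1)},..,\mathrm{p}^{b(j)}\},Y_u=1,v\in a,Y_v=0,u\text{ precedes }v\text{ in }q^{\to a}\}$, and $\widehat G(q)=\frac{k_{a,b}}{k}A(q)+\frac{k_{b,a}}{k}B(q)-\lambda|A(q)-B(q)|$. Set $O(i,0)=(\mathrm{p}^{a(1)},\dots,\mathrm{p}^{a(i)})$ and $O(0,j)=(\mathrm{p}^{b(1)},\dots,\mathrm{p}^{b(j)})$. For $i=1,\dots,n^a$ and $j=1,\dots,n^b$ (in increasing order): if $\widehat G(O(i-1,j)\oplus\mathrm{p}^{a(i)})>\widehat G(O(i,j-1)\oplus\mathrm{p}^{b(j)})$ then $O(i,j)=O(i-1,j)\oplus\mathrm{p}^{a(i)}$, otherwise $O(i,j)=O(i,j-1)\oplus\mathrm{p}^{b(j)}$,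 where $\oplus$ appends an element to the end of a list. The output is $O(n^a,n^b)$, a cross-group ordering. *)

(* Defs.v *)
From HB Require Import structures.
From mathcomp Require Import all_boot all_order all_algebra.
Set Implicit Arguments. Unset Strict Implicit. Unset Printing Implicit Defensive.
Import Order.TTheory GRing.Theory Num.Theory.
Local Open Scope ring_scope.

(* An instance is (g, k): g = false for group a, g = true for group b,
   k = 0-based position of the instance in the fixed ordering p^a resp. p^b. *)
Definition inst := (bool * nat)%type.

Section XAUC.
Variables (R : realFieldType) (ya yb : seq bool).

Definition na := size ya.
Definition nb := size yb.
Definition lab (x : inst) : bool := nth false (if x.1 then yb else ya) x.2.

Definition n1a := count id ya.
Definition n0a := count negb ya.
Definition n1b := count id yb.
Definition n0b := count negb yb.
Definition n1 := (n1a + n1b)%N.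
Definition n0 := (n0a + n0b)%N.
Definition kab := (n1a * n0b)%N.
Definition kba := (n0a * n1b)%N.
Definition k := (n0 * n1)%N.

Definition pa (i : nat) : seq inst := [seq (false, t) | t <- iota 0 i].
Definition pb (j : nat) : seq inst := [seq (true, t) | t <- iota 0 j].

Definition is_cross (o : seq inst) : bool :=
  ([seq x <- o | ~~ x.1] == pa na) && ([seq x <- o | x.1] == pb nb).

(* number of pairs (u,v) with P u v and u preceding v (ranked higher) in o *)
Definition npairs (P : inst -> inst -> bool) (o : seq inst) : nat :=
  (\sum_(i < size o) \sum_(j < size o)
     ((i < j) && P (nth (false, 0) o i) (nth (false, 0) o j)))%N.

Definition AUC (o : seq inst) : R :=
  (npairs (fun u v => lab u && ~~ lab v) o)%:R / (n1 * n0)%:R.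

Definition xAUC_ab (o : seq inst) : R :=
  (npairs (fun u v => [&& ~~ u.1, lab u, v.1 & ~~ lab v]) o)%:R / (n1a * n0b)%:R.
Definition xAUC_ba (o : seq inst) : R :=
  (npairs (fun u v => [&& u.1, lab u, ~~ v.1 & ~~ lab v]) o)%:R / (n1b * n0a)%:R.

Definition to_b (q : seq inst) : seq inst :=
  let j := count (fun x : inst => x.1) q in
  q ++ [seq (true, t) | t <- iota j (nb - j)].
Definition to_a (q : seq inst) : seq inst :=
  let i := count (fun x : inst => ~~ x.1) q in
  q ++ [seq (false, t) | t <- iota i (na - i)].

Definition Aq (q : seq inst) : R :=
  (npairs (fun u v => [&& ~~ u.1, lab u, v.1 & ~~ lab v]) (to_b q))%:R
    / (n1a * n0b)%:R.
Definition Bq (q : seq inst) : R :=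
  (npairs (fun u v => [&& u.1, lab u, ~~ v.1 & ~~ lab v]) (to_a q))%:R
    / (n1b * n0a)%:R.

Definition Ghat (lambda : R) (q : seq inst) : R :=
  kab%:R / k%:R * Aq q + kba%:R / k%:R * Bq q - lambda * `|Aq q - Bq q|.

(* O i j, with 0-based indices: p^{a(i)} is (false, i-1) *)
Fixpoint O (lambda : R) (i : nat) : nat -> seq inst :=
  fix Oi (j : nat) : seq inst :=
    match i, j with
    | 0, _ => pb j
    | i'.+1, 0 => pa i
    | i'.+1, j'.+1 =>
        let c1 := rcons (O lambda i' j) (false, i') in
        let c2 := rcons (Oi j') (true, j') in
        if Ghat lambda c2 < Ghat lambda c1 then c1 else c2
    end.

Definition xOrder (lambda : R) : seq inst := O lambda na nb.

End XAUC.

(* Main.v *)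
Require Import Defs.
From HB Require Import structures.
From mathcomp Require Import all_boot all_order all_algebra zify ring.
Import Order.TTheory GRing.Theory Num.Theory.
Set Implicit Arguments. Unset Strict Implicit.

Fixpoint pcw (w : inst -> inst -> nat) (q : seq inst) : nat :=
  match q with
  | [::] => 0
  | x :: q' => (\sum_(y <- q') w x y + pcw w q')%N
  end.

Lemma npairs_pcw P q : npairs P q = pcw (fun u v => nat_of_bool (P u v)) q.
Proof.
elim: q => [|x q IH]; first by rewrite /npairs big_ord0.
rewrite /npairs /= big_ord_recl /= big_ord_recl /= add0n.
rewrite -IH /npairs; congr addn.
  rewrite (big_nth (false,0)) big_mkord; apply: eq_bigr => i _.
  by rewrite add0n.
apply: eq_bigr => i _; rewrite big_ord_recl /= add0n.
by apply: eq_bigr => j _; rewrite /bump /= !add0n add1n.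
Qed.

Lemma pcw_cat w q1 q2 : pcw w (q1 ++ q2) =
  (pcw w q1 + \sum_(u <- q1) \sum_(v <- q2) w u v + pcw w q2)%N.
Proof.
elim: q1 => [|x q IH] /=; first by rewrite big_nil.
by rewrite IH big_cat big_cons /=; lia.
Qed.

Lemma pcw_rcons w q x : pcw w (rcons q x) = (pcw w q + \sum_(u <- q) w u x)%N.
Proof.
rewrite -cats1 pcw_cat /= big_nil !addn0; congr addn.
by apply: eq_bigr => u _; rewrite big_cons big_nil addn0.
Qed.

Lemma pcwD w1 w2 q : pcw (fun u v => w1 u v + w2 u v)%N q = (pcw w1 q + pcw w2 q)%N.
Proof.
elim: q => [|x q IH] //=; rewrite IH big_split /=; lia.
Qed.

Lemma pcw_ext w1 w2 q : (forall u v, w1 u v = w2 u v) -> pcw w1 q = pcw w2 q.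
Proof.
move=> E; elim: q => [|x q IH] //=; rewrite IH; congr addn.
by apply: eq_bigr => ? _.
Qed.

Lemma pcw_filter w (f : pred inst) q :
  (forall u v, ~~ f u -> w u v = 0%N) -> (forall u v, ~~ f v -> w u v = 0%N) ->
  pcw w q = pcw w (filter f q).
Proof.
move=> H1 H2; elim: q => [|x q IH] //=.
case: (boolP (f x)) => fx /=.
  rewrite IH big_filter; congr addn.
  rewrite [RHS]big_mkcond /=; apply: eq_bigr => y _.
  by case: (boolP (f y)) => // fy; rewrite H2.
by rewrite IH big1 // => y _; rewrite H1.
Qed.

Definition ok (i j : nat) (q : seq inst) : bool :=
  ([seq x <- q | ~~ x.1] == pa i) && ([seq x <- q | x.1] == pb j).

Lemma pa_S i : pa i.+1 = rcons (pa i) (false, i).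
Proof. by rewrite /pa -addn1 iotaD map_cat /= cats1. Qed.
Lemma pb_S j : pb j.+1 = rcons (pb j) (true, j).
Proof. by rewrite /pb -addn1 iotaD map_cat /= cats1. Qed.

Lemma ok_perm i j q : ok i j q -> perm_eq q (pa i ++ pb j).
Proof.
case/andP=> /eqP <- /eqP <-.
rewrite perm_sym perm_catC.
by rewrite (perm_filterC (fun x : inst => x.1)).
Qed.

Lemma ok_rcons_a i j q : ok i.+1 j (rcons q (false, i)) = ok i j q.
Proof.
rewrite /ok !filter_rcons /= pa_S eqseq_rcons eqxx andbT //.
Qed.

Lemma ok_rcons_b i j q : ok i j.+1 (rcons q (true, j)) = ok i j q.
Proof.
rewrite /ok !filter_rcons /= pb_S eqseq_rcons eqxx andbT //.
Qed.

Lemma ok_inv i j q x : ok i j (rcons q x) ->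
  (exists2 i', i = i'.+1 & x = (false, i') /\ ok i' j q) \/
  (exists2 j', j = j'.+1 & x = (true, j') /\ ok i j' q).
Proof.
case: x => [[] t] H.
  right; case: j H => [|j] H.
    by move: H; rewrite /ok !filter_rcons /= andbC /pb /= -size_eq0 size_rcons.
  exists j => //; move: H; rewrite /ok !filter_rcons /= pb_S eqseq_rcons.
  by case/andP=> -> /andP [-> /eqP [->]].
left; case: i H => [|i] H.
  by move: H; rewrite /ok !filter_rcons /= /pa /= -size_eq0 size_rcons.
exists i => //; move: H; rewrite /ok !filter_rcons /= pa_S eqseq_rcons.
by case/andP=> /andP [-> /eqP [->]] ->.
Qed.

Lemma filter_all_nil (f : pred inst) q :
  [seq x <- q | ~~ f x] = [::] -> [seq x <- q | f x] = q.
Proof.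
elim: q => [|x q IH] //=; case: (boolP (f x)) => //= fx.
by move/IH ->.
Qed.

Lemma ok0j j q : ok 0 j q -> q = pb j.
Proof.
case/andP=> /eqP H /eqP <-.
by rewrite filter_all_nil.
Qed.

Lemma oki0 i q : ok i 0 q -> q = pa i.
Proof.
case/andP=> /eqP <- /eqP H.
apply/esym/(@filter_all_nil (fun x : inst => ~~ x.1)).
rewrite (eq_filter (a2 := fun x : inst => x.1)) ?H // => x /=; by rewrite negbK.
Qed.

Lemma filter_none (f : pred inst) q : all (fun x => ~~ f x) q -> [seq x <- q | f x] = [::].
Proof. by elim: q => [|x q IH] //= /andP [/negbTE -> /IH]. Qed.

Lemma ok_pa i : ok i 0 (pa i).
Proof.
rewrite /ok; apply/andP; split; apply/eqP.
  by apply/all_filterP; rewrite /pa all_map; apply/allP.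
by apply: filter_none; rewrite /pa all_map; apply/allP.
Qed.

Lemma ok_pb j : ok 0 j (pb j).
Proof.
rewrite /ok; apply/andP; split; apply/eqP.
  by apply: filter_none; rewrite /pb all_map; apply/allP.
by apply/all_filterP; rewrite /pb all_map; apply/allP.
Qed.

Definition wA ya yb (u v : inst) : nat := [&& ~~ u.1, lab ya yb u, v.1 & ~~ lab ya yb v].
Definition wB ya yb (u v : inst) : nat := [&& u.1, lab ya yb u, ~~ v.1 & ~~ lab ya yb v].
Definition wWa ya yb (u v : inst) : nat := [&& ~~ u.1, ~~ v.1, lab ya yb u & ~~ lab ya yb v].
Definition wWb ya yb (u v : inst) : nat := [&& u.1, v.1, lab ya yb u & ~~ lab ya yb v].
Definition wH ya yb (u v : inst) : nat := lab ya yb u && ~~ lab ya yb v.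

Definition rb yb j : seq inst := [seq (true, t) | t <- iota j (nb yb - j)].
Definition ra ya i : seq inst := [seq (false, t) | t <- iota i (na ya - i)].

Lemma ok_countb i j q : ok i j q -> count (fun x : inst => x.1) q = j.
Proof. by case/andP=> _ /eqP H; rewrite -size_filter H size_map size_iota. Qed.
Lemma ok_counta i j q : ok i j q -> count (fun x : inst => ~~ x.1) q = i.
Proof. by case/andP=> /eqP H _; rewrite -size_filter H size_map size_iota. Qed.

Lemma sumn_perm (F : inst -> nat) s1 s2 : perm_eq s1 s2 ->
  (\sum_(u <- s1) F u = \sum_(u <- s2) F u)%N.
Proof. by move=> P; apply: perm_big. Qed.

Definition EG ya yb i j :=
  (\sum_(u <- pa i ++ pb j) \sum_(v <- rb yb j) wA ya yb u v + pcw (wA ya yb) (rb yb j)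
  + \sum_(u <- pa i ++ pb j) \sum_(v <- ra ya i) wB ya yb u v + pcw (wB ya yb) (ra ya i))%N.

Lemma G_dec ya yb i j q : ok i j q ->
  (pcw (wA ya yb) (to_b yb q) + pcw (wB ya yb) (to_a ya q) =
   pcw (wA ya yb) q + pcw (wB ya yb) q + EG ya yb i j)%N.
Proof.
move=> H; rewrite /to_b /to_a (ok_countb H) (ok_counta H).
rewrite -/(rb yb j) -/(ra ya i) !pcw_cat /EG.
rewrite !(sumn_perm _ (ok_perm H)).
set s1 := \sum_(u <- _) \sum_(v <- rb yb j) _.
set s2 := \sum_(u <- _) \sum_(v <- ra ya i) _.
lia.
Qed.

Lemma H_dec ya yb i j q : ok i j q ->
  pcw (wH ya yb) q = (pcw (wA ya yb) q + pcw (wB ya yb) q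
     + pcw (wWa ya yb) (pa i) + pcw (wWb ya yb) (pb j))%N.
Proof.
move=> H.
rewrite (@pcw_ext (wH ya yb) (fun u v => wA ya yb u v + wB ya yb u v + wWa ya yb u v + wWb ya yb u v)%N); last first.
  move=> [[] s] [[] t]; rewrite /wH /wA /wB /wWa /wWb /=;
  by case: (lab ya yb _); case: (lab ya yb _).
rewrite !pcwD.
case/andP: H => /eqP Ha /eqP Hb.
rewrite (@pcw_filter (wWa ya yb) (fun x => ~~ x.1)); last 2 first.
- by move=> [[] s] v.
- by move=> u [[] s]; rewrite /wWa /= ?andbF.
rewrite Ha (@pcw_filter (wWb ya yb) (fun x => x.1)); last 2 first.
- by move=> [[] s] v.
- by move=> u [[] s]; rewrite /wWb /= ?andbF.
by rewrite Hb.
Qed.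

Local Open Scope ring_scope.

Lemma Ghat_eq (R : realFieldType) ya yb q :
  (0 < n1a ya)%N -> (0 < n0a ya)%N -> (0 < n1b yb)%N -> (0 < n0b yb)%N ->
  Ghat ya yb (0 : R) q =
  (pcw (wA ya yb) (to_b yb q) + pcw (wB ya yb) (to_a ya q))%N%:R / (k ya yb)%:R.
Proof.
move=> h1 h2 h3 h4.
rewrite /Ghat /Aq /Bq !npairs_pcw.
rewrite -[pcw _ (to_b yb q)]/(pcw (wA ya yb) (to_b yb q)).
rewrite -[pcw _ (to_a ya q)]/(pcw (wB ya yb) (to_a ya q)).
rewrite /kab /kba /k /n0 /n1 !natrD !natrM mul0r subr0.
have a1 : (n1a ya)%:R != 0 :> R by rewrite pnatr_eq0 -lt0n.
have a2 : (n0a ya)%:R != 0 :> R by rewrite pnatr_eq0 -lt0n.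
have a3 : (n1b yb)%:R != 0 :> R by rewrite pnatr_eq0 -lt0n.
have a4 : (n0b yb)%:R != 0 :> R by rewrite pnatr_eq0 -lt0n.
have a5 : (n0a ya)%:R + (n0b yb)%:R != 0 :> R by rewrite -natrD pnatr_eq0 -lt0n addn_gt0 h2.
have a6 : (n1a ya)%:R + (n1b yb)%:R != 0 :> R by rewrite -natrD pnatr_eq0 -lt0n addn_gt0 h1.
by field; rewrite ?a1 ?a2 ?a3 ?a4 ?a5 ?a6.
Qed.

Lemma cmp_eq (R : realFieldType) ya yb i j q1 q2 :
  (0 < n1a ya)%N -> (0 < n0a ya)%N -> (0 < n1b yb)%N -> (0 < n0b yb)%N ->
  ok i j q1 -> ok i j q2 ->
  (Ghat ya yb (0 : R) q1 < Ghat ya yb (0 : R) q2) =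
  (pcw (wH ya yb) q1 < pcw (wH ya yb) q2)%N.
Proof.
move=> h1 h2 h3 h4 o1 o2; rewrite !Ghat_eq //.
have kp : 0 < (k ya yb)%:R :> R.
  by rewrite ltr0n /k muln_gt0 !addn_gt0 h1 h2.
rewrite ltr_pM2r ?invr_gt0 // ltr_nat (G_dec _ _ o1) (G_dec _ _ o2).
rewrite (H_dec _ _ o1) (H_dec _ _ o2).
set e := EG ya yb i j; set c1 := pcw (wWa ya yb) (pa i); set c2 := pcw (wWb ya yb) (pb j).
apply/idP/idP => H; lia.
Qed.

Lemma H_inc ya yb i j q x : ok i j q ->
  pcw (wH ya yb) (rcons q x) = (pcw (wH ya yb) q + \sum_(u <- pa i ++ pb j) wH ya yb u x)%N.
Proof. by move=> H; rewrite pcw_rcons (sumn_perm _ (ok_perm H)). Qed.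

Lemma O_opt (R : realFieldType) ya yb :
  (0 < n1a ya)%N -> (0 < n0a ya)%N -> (0 < n1b yb)%N -> (0 < n0b yb)%N ->
  forall i j, ok i j (O ya yb (0 : R) i j) /\
    forall q, ok i j q -> (pcw (wH ya yb) q <= pcw (wH ya yb) (O ya yb (0 : R) i j))%N.
Proof.
move=> h1 h2 h3 h4; elim=> [|i IHi] j.
  have -> : O ya yb (0 : R) 0 j = pb j by case: j.
  by split; [exact: ok_pb | move=> q /ok0j ->].
elim: j => [|j IHj].
  have -> : O ya yb (0 : R) i.+1 0 = pa i.+1 by [].
  by split; [exact: ok_pa | move=> q /oki0 ->].
have [oc1 Hc1] := IHi j.+1.
have [oc2 Hc2] := IHj.
set c1 := rcons (O ya yb (0 : R) i j.+1) (false, i).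
set c2 := rcons (O ya yb (0 : R) i.+1 j) (true, j).
have ok1 : ok i.+1 j.+1 c1 by rewrite /c1 ok_rcons_a.
have ok2 : ok i.+1 j.+1 c2 by rewrite /c2 ok_rcons_b.
have -> : O ya yb (0 : R) i.+1 j.+1 =
   if Ghat ya yb (0 : R) c2 < Ghat ya yb (0 : R) c1 then c1 else c2 by reflexivity.
have bound : forall q, ok i.+1 j.+1 q ->
   (pcw (wH ya yb) q <= maxn (pcw (wH ya yb) c1) (pcw (wH ya yb) c2))%N.
  move=> q; case/lastP: q => [|q x].
    by rewrite /ok /=.
  case/ok_inv => [[i' [<-] [-> oq]] | [j' [<-] [-> oq]]].
    rewrite (H_inc _ _ _ oq) /c1 (H_inc _ _ _ oc1) leq_max; apply/orP; left.
    by rewrite leq_add2r Hc1.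
  rewrite (H_inc _ _ _ oq) /c2 (H_inc _ _ _ oc2) leq_max; apply/orP; right.
  by rewrite leq_add2r Hc2.
rewrite (cmp_eq _ _ _ _ _ ok2 ok1) //.
case: ltnP => Hlt; (split; [done|]) => q /bound; move/leq_trans; apply;
  rewrite geq_max leqnn ?andbT //; exact: ltnW.
Qed.

Theorem theorem1 (R : realFieldType) (ya yb : seq bool) :
  (0 < n1a ya)%N -> (0 < n0a ya)%N -> (0 < n1b yb)%N -> (0 < n0b yb)%N ->
  is_cross ya yb (xOrder ya yb (0 : R)) /\
  (forall o : seq inst, is_cross ya yb o ->
     AUC R ya yb o <= AUC R ya yb (xOrder ya yb (0 : R))).
Proof.
move=> h1 h2 h3 h4.
have [oO HO] := @O_opt R ya yb h1 h2 h3 h4 (na ya) (nb yb).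
split; first exact: oO.
move=> o Ho; rewrite /AUC !npairs_pcw.
rewrite -[pcw _ o]/(pcw (wH ya yb) o).
rewrite -[pcw _ (xOrder _ _ _)]/(pcw (wH ya yb) (xOrder ya yb (0 : R))).
apply: ler_wpM2r; first by rewrite invr_ge0 ler0n.
by rewrite ler_nat; apply: HO.
Qed.
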